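(* Let $G$ be a $(k+1)$-critical hypergraph with $k\ge3$. If there exist a vertex $v\in V(G)$ and an edge $e\in E(G)$ such that $v$ is a separating vertex of $G-e$ (regardless of whether $v\in e$), then $G$ is a Hajós join of two hypergraphs.
   Context: A hypergraph is a pair $G=(V,E)$ of finite sets with $E\subseteq 2^V$ and $|e|\ge2$ for all $e\in E$ (no multiple edges). A coloring requires every edge to contain two vertices of different colors; $\chi$ is the chromatic number. $G$ is $(k+1)$-critical if $\chi(G)=k+1$ but $\chi(H)\le k$ for every proper subhypergraph $H$. $G-e$ is obtained by deleting the edge $e$. A vertex $v$ is a separating vertex of a hypergraph $H$ if $H$ is the union of two induced subhypergraphs $H_1,H_2$ with $V(H_1)\cap V(H_2)=\{v\}$ and $|V(H_i)|\ge2$. Hajós join: for vertex-disjoint $G_1,G_2$, $e_i\in E(G_i)$, $v_i\in e_i$, delete $e_1,e_2$, identify $v_1,v_2$ into a new vertex $v^*$, and add a new edge $e^*$ equal to $(e_1\cup e_2)\setminus\{v_1,v_2\}$ or to $((e_1\cup e_2)\setminus\{v_1,v_2\})\cup\{v^*\}$. *)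

(* Defs.v *)
From mathcomp Require Import all_boot.
Set Implicit Arguments. Unset Strict Implicit. Unset Printing Implicit Defensive.

Record hgraph (T : finType) := HGraph { hV : {set T}; hE : {set {set T}} }.

(* G = (V,E) is a hypergraph: every edge is a subset of V of size >= 2
   (E is a set, so there are no multiple edges). *)
Definition is_hypergraph (T : finType) (G : hgraph T) : Prop :=
  forall e, e \in hE G -> e \subset hV G /\ 2 <= #|e|.

Definition colorable (T : finType) (G : hgraph T) (k : nat) : Prop :=
  exists f : T -> nat, (forall x, x \in hV G -> f x < k) /\
    forall e, e \in hE G -> exists x, exists y,
      [/\ x \in e, y \in e & f x != f y].

Definition chromatic_number_eq (T : finType) (G : hgraph T) (k : nat) : Prop :=
  colorable G k /\ forall j, j < k -> ~ colorable G j.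

Definition proper_subhypergraph (T : finType) (H G : hgraph T) : Prop :=
  [/\ is_hypergraph H, hV H \subset hV G, hE H \subset hE G
    & (hV H, hE H) <> (hV G, hE G)].

(* G is (k+1)-critical *)
Definition critical (T : finType) (G : hgraph T) (k : nat) : Prop :=
  chromatic_number_eq G k.+1 /\
  forall H, proper_subhypergraph H G -> colorable H k.

Definition delete_edge (T : finType) (G : hgraph T) (e : {set T}) : hgraph T :=
  HGraph (hV G) (hE G :\ e).

Definition induced (T : finType) (G : hgraph T) (W : {set T}) : hgraph T :=
  HGraph W [set f in hE G | f \subset W].

Definition separating_vertex (T : finType) (H : hgraph T) (v : T) : Prop :=
  exists W1 W2 : {set T},
    [/\ W1 \subset hV H, W2 \subset hV H,
        W1 :&: W2 = [set v], 2 <= #|W1| & 2 <= #|W2|] /\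
    hV H = hV (induced H W1) :|: hV (induced H W2) /\
    hE H = hE (induced H W1) :|: hE (induced H W2).

(* Hajós join of vertex-disjoint G1 (on T1) and G2 (on T2); disjointness is
   realised by taking the vertex universe option (T1 + T2), where None is the
   new identified vertex v*. *)
Definition hj_map1 (T1 T2 : finType) (v1 : T1) (x : T1) : option (T1 + T2) :=
  if x == v1 then None else Some (inl x).
Definition hj_map2 (T1 T2 : finType) (v2 : T2) (x : T2) : option (T1 + T2) :=
  if x == v2 then None else Some (inr x).

Definition hajos_join (T1 T2 : finType) (G1 : hgraph T1) (G2 : hgraph T2)
    (e1 : {set T1}) (e2 : {set T2}) (v1 : T1) (v2 : T2) (keep_vstar : bool)
    : hgraph (option (T1 + T2)) :=
  let f1 := @hj_map1 T1 T2 v1 in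
  let f2 := @hj_map2 T1 T2 v2 in
  let core := ((f1 @: (e1 :\ v1)) :|: (f2 @: (e2 :\ v2))) in
  let estar := if keep_vstar then None |: core else core in
  HGraph ((f1 @: hV G1) :|: (f2 @: hV G2))
         ([set f1 @: f | f : {set T1} in hE G1 :\ e1] :|: [set f2 @: f | f : {set T2} in hE G2 :\ e2]
            :|: [set estar]).

Definition hiso (S T : finType) (H : hgraph S) (G : hgraph T) : Prop :=
  exists phi : S -> T,
    [/\ {in hV H &, injective phi}, phi @: hV H = hV G
      & hE G = [set phi @: f | f : {set S} in hE H]].

Definition is_hajos_join (T : finType) (G : hgraph T) : Prop :=
  exists (T1 T2 : finType) (G1 : hgraph T1) (G2 : hgraph T2)
         (e1 : {set T1}) (e2 : {set T2}) (v1 : T1) (v2 : T2) (b : bool),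
    [/\ is_hypergraph G1, is_hypergraph G2, e1 \in hE G1 & e2 \in hE G2] /\
    v1 \in e1 /\ v2 \in e2 /\
    hiso (hajos_join G1 G2 e1 e2 v1 v2 b) G.

(* Main.v *)
Require Import Defs.
From mathcomp Require Import all_boot.
Set Implicit Arguments. Unset Strict Implicit. Unset Printing Implicit Defensive.

Definition sw (p q n : nat) := if n == p then q else if n == q then p else n.

Lemma swK p q : involutive (sw p q).
Proof.
move=> n; rewrite /sw.
case: (eqVneq n p) => [->|np].
  by case: (eqVneq q p) => [->|qp]; rewrite ?eqxx.
case: (eqVneq n q) => [->|nq]; first by rewrite eqxx.
by rewrite (negbTE np) (negbTE nq).
Qed.

Lemma sw_inj p q : injective (sw p q).
Proof. exact: can_inj (swK p q). Qed.

Lemma sw_lt p q k n : p < k -> q < k -> n < k -> sw p q n < k.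
Proof. by move=> hp hq hn; rewrite /sw; do 2 case: ifP => _ //. Qed.

Lemma not_sub (T : finType) (G : hgraph T) k (e : {set T}) v (X Y : {set T}) (c : T -> nat) :
  is_hypergraph G -> critical G k -> e \in hE G ->
  X \subset hV G -> Y \subset hV G -> X :&: Y = [set v] -> 2 <= #|Y| ->
  hV G = X :|: Y ->
  (forall f, f \in hE G -> f != e -> f \subset X \/ f \subset Y) ->
  (forall x, x \in hV G -> c x < k) ->
  (forall f, f \in hE G -> f != e -> exists x y, [/\ x \in f, y \in f & c x != c y]) ->
  ~ e \subset X.
Proof.
move=> hG crit eE sX sY XY cY HV Hcls cV cE eX.
have [w [wY wv]] : exists w, w \in Y /\ w != v.
  move: cY => /card_gt1P [x [y [xY yY xy]]].
  case: (eqVneq x v) => [xv|xv]; last by exists x.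
  by exists y; split => //; rewrite -xv eq_sym.
have wX : w \notin X.
  apply/negP => wX; have : w \in X :&: Y by rewrite inE wX wY.
  by rewrite XY inE (negbTE wv).
have vXY : v \in X :&: Y by rewrite XY set11.
move: (vXY); rewrite inE => /andP[vX vY].
have [c1 [c1V c1E]] : colorable (induced G X) k.
  apply: crit.2; split => /=.
  - move=> f; rewrite inE => /andP[fE fX]; split => //; exact: (hG f fE).2.
  - exact: sX.
  - by apply/subsetP => f; rewrite inE => /andP[].
  - case=> XV _; have : w \in hV G by apply: (subsetP sY).
    by rewrite -XV (negbTE wX).
have cv : c v < k := cV v (subsetP sX v vX).
have c1v : c1 v < k := c1V v vX.
apply: (crit.1.2 k (ltnSn k)).
exists (fun x => if x \in X then c1 x else sw (c v) (c1 v) (c x)); split.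
  move=> x xV /=; case: ifP => xX; [exact: (c1V x xX) | apply: sw_lt => //; exact: cV].
move=> f fE.
have onY : forall x, x \in Y ->
    (if x \in X then c1 x else sw (c v) (c1 v) (c x)) = sw (c v) (c1 v) (c x).
  move=> x xY; case: ifP => // xX.
  have : x \in X :&: Y by rewrite inE xX xY.
  by rewrite XY inE => /eqP ->; rewrite /sw eqxx.
have onX : forall f, f \in hE G -> f \subset X -> exists x y,
    [/\ x \in f, y \in f &
      (if x \in X then c1 x else sw (c v) (c1 v) (c x)) !=
      (if y \in X then c1 y else sw (c v) (c1 v) (c y))].
  move=> g gE gX; have : g \in hE (induced G X) by rewrite inE gE gX.
  move=> /c1E [x [y [xe ye nxy]]]; exists x, y.
  by rewrite (subsetP gX x xe) (subsetP gX y ye).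
case: (eqVneq f e) => [->|fe]; first exact: onX.
case: (Hcls f fE fe) => fS; first exact: onX.
have [x [y [xf yf nxy]]] := cE f fE fe.
exists x, y; rewrite !onY ?(subsetP fS) //; split => //.
by rewrite (inj_eq (@sw_inj _ _)).
Qed.

Theorem theorem10 (T : finType) (G : hgraph T) (k : nat) :
  is_hypergraph G -> 3 <= k -> critical G k ->
  (exists (v : T) (e : {set T}),
      v \in hV G /\ e \in hE G /\ separating_vertex (delete_edge G e) v) ->
  is_hajos_join G.
Proof.
move=> hG k3 crit [v [e [vV [eE [W1 [W2 [[sW1 sW2 W12 cW1 cW2] [HV HE]]]]]]]].
rewrite /= in sW1 sW2 HV HE.
have Hcls : forall f, f \in hE G -> f != e -> f \subset W1 \/ f \subset W2.
  move=> f fE fe; have : f \in hE G :\ e by rewrite in_setD1 fe fE.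
  by rewrite HE !inE => /orP[/andP[_ ->]|/andP[_ ->]]; [left|right].
have [c [cV cE]] : colorable (delete_edge G e) k.
  apply: crit.2; split => //=.
  - move=> f; rewrite inE => /andP[_ fE]; exact: hG.
  - exact: subD1set.
  - by move=> [] /setP /(_ e); rewrite !inE eqxx eE.
rewrite /= in cV cE.
have cE' : forall f, f \in hE G -> f != e ->
    exists x y, [/\ x \in f, y \in f & c x != c y].
  by move=> f fE fe; apply: cE; rewrite in_setD1 fe fE.
have emono : forall x y, x \in e -> y \in e -> c x = c y.
  move=> x y xe ye; apply/eqP; apply/negPn/negP => nxy.
  apply: (crit.1.2 k (ltnSn k)); exists c; split => // f fE.
  case: (eqVneq f e) => [->|fe]; first by exists x, y.
  exact: cE'.
have [eV ecard] := hG e eE.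
have vW : v \in W1 :&: W2 by rewrite W12 set11.
move: (vW); rewrite inE => /andP[vW1 vW2].
have nsub1 : ~ e \subset W1 := not_sub hG crit eE sW1 sW2 W12 cW2 HV Hcls cV cE'.
have nsub2 : ~ e \subset W2.
  have W21 : W2 :&: W1 = [set v] by rewrite setIC.
  have HV' : hV G = W2 :|: W1 by rewrite setUC.
  have Hcls' : forall f, f \in hE G -> f != e -> f \subset W2 \/ f \subset W1.
    by move=> f fE fe; case: (Hcls f fE fe); [right|left].
  exact: (not_sub hG crit eE sW2 sW1 W21 cW1 HV' Hcls' cV cE').
have /subsetPn [y ye yW1] : ~~ (e \subset W1) by apply/negP.
have /subsetPn [z ze zW2] : ~~ (e \subset W2) by apply/negP.
have zW1 : z \in W1.
  by move: (subsetP eV z ze); rewrite HV inE (negbTE zW2) orbF.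
have ea : forall x, x \in e -> c x = c z := fun x xe => emono x z xe ze.
have czk : c z < k := cV z (subsetP eV z ze).
have cva : c v = c z.
  apply/eqP/negPn/negP => nva.
  have [c' [c'k c'z c'v]] : exists c', [/\ c' < 3, c' != c z & c' != c v].
    case: (c z) (c v) => [|[|[|n]]] [|[|[|m]]];
      by [exists 0; split | exists 1; split | exists 2; split].
  have c'k' : c' < k by apply: leq_trans k3.
  apply: (crit.1.2 k (ltnSn k)).
  exists (fun x => if x \in W1 then c x else sw (c z) c' (c x)); split.
    move=> x xV /=; case: ifP => xX; [exact: cV | apply: sw_lt => //; exact: cV].
  move=> f fE.
  case: (eqVneq f e) => [->|fe].
    exists z, y; rewrite zW1 (negbTE yW1) (ea y ye); split => //.
    by rewrite /sw eqxx eq_sym.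
  case: (Hcls f fE fe) => fS.
    have [x [x' [xf x'f nxy]]] := cE' f fE fe.
    by exists x, x'; rewrite (subsetP fS x xf) (subsetP fS x' x'f).
  have onY : forall x, x \in W2 ->
      (if x \in W1 then c x else sw (c z) c' (c x)) = sw (c z) c' (c x).
    move=> x xY; case: ifP => // xX.
    have : x \in W1 :&: W2 by rewrite inE xX xY.
    rewrite W12 inE => /eqP ->.
    by rewrite /sw (negbTE nva) eq_sym (negbTE c'v).
  have [x [x' [xf x'f nxy]]] := cE' f fE fe.
  exists x, x'; rewrite !onY ?(subsetP fS) //; split => //.
  by rewrite (inj_eq (@sw_inj _ _)).
pose e1 := v |: (e :&: W1).
pose e2 := v |: (e :&: W2).
have e1W : e1 \subset W1.
  by apply/subsetP => x; rewrite !inE => /orP[/eqP->|/andP[_ ->]].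
have e2W : e2 \subset W2.
  by apply/subsetP => x; rewrite !inE => /orP[/eqP->|/andP[_ ->]].
have e1mono : forall x, x \in e1 -> c x = c z.
  by move=> x; rewrite !inE => /orP[/eqP->|/andP[xe _]]; [exact: cva | exact: ea].
have e2mono : forall x, x \in e2 -> c x = c z.
  by move=> x; rewrite !inE => /orP[/eqP->|/andP[xe _]]; [exact: cva | exact: ea].
have e1E : e1 \notin hE G.
  apply/negP => e1E.
  have e1e : e1 != e.
    apply: (contraNneq _ yW1) => ee; apply: (subsetP e1W); by rewrite ee.
  have [x [x' [xe1 x'e1 nxx]]] := cE' e1 e1E e1e.
  by move: nxx; rewrite (e1mono x xe1) (e1mono x' x'e1) eqxx.
have e2E : e2 \notin hE G.
  apply/negP => e2E.
  have e2e : e2 != e.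
    apply: (contraNneq _ zW2) => ee; apply: (subsetP e2W); by rewrite ee.
  have [x [x' [xe1 x'e1 nxx]]] := cE' e2 e2E e2e.
  by move: nxx; rewrite (e2mono x xe1) (e2mono x' x'e1) eqxx.
have zv : z != v by apply: contraNneq zW2 => ->.
have ye2 : y \in e2.
  by rewrite !inE ye /=; move: (subsetP eV y ye); rewrite HV inE (negbTE yW1) /= => ->; rewrite orbT.
have yv : y != v by apply: contraNneq yW1 => ->.
exists T, T, (HGraph W1 (e1 |: [set f in hE G | f \subset W1])),
  (HGraph W2 (e2 |: [set f in hE G | f \subset W2])), e1, e2, v, v, (v \in e).
split; [split|split; [by rewrite setU11|split; [by rewrite setU11|]]].
- move=> f; rewrite /= !inE => /orP[/eqP->|/andP[fE fW]]; last by split => //; exact: (hG f fE).2.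
  split => //; apply/card_gt1P; exists v, z; split => //; first by rewrite setU11.
    by rewrite !inE ze zW1 orbT.
  by rewrite eq_sym.
- move=> f; rewrite /= !inE => /orP[/eqP->|/andP[fE fW]]; last by split => //; exact: (hG f fE).2.
  split => //; apply/card_gt1P; exists v, y; split => //; first by rewrite setU11.
  by rewrite eq_sym.
- by rewrite /= setU11.
- by rewrite /= setU11.
pose phi := fun o : option (T + T) =>
  match o with None => v | Some (inl x) => x | Some (inr x) => x end.
have p1 : forall x, phi (@hj_map1 T T v x) = x.
  by move=> x; rewrite /hj_map1; case: eqP => [->|].
have p2 : forall x, phi (@hj_map2 T T v x) = x.
  by move=> x; rewrite /hj_map2; case: eqP => [->|].
have im1 : forall A : {set T}, phi @: (@hj_map1 T T v @: A) = A.
  move=> A; rewrite -imset_comp; under eq_imset => x do rewrite /= p1.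
  exact: imset_id.
have im2 : forall A : {set T}, phi @: (@hj_map2 T T v @: A) = A.
  move=> A; rewrite -imset_comp; under eq_imset => x do rewrite /= p2.
  exact: imset_id.
have IM1 : forall S : {set {set T}},
    [set phi @: f | f : {set option (T + T)} in [set @hj_map1 T T v @: g | g : {set T} in S]] = S.
  move=> S; rewrite -imset_comp; under eq_imset => g do rewrite /= im1.
  exact: imset_id.
have IM2 : forall S : {set {set T}},
    [set phi @: f | f : {set option (T + T)} in [set @hj_map2 T T v @: g | g : {set T} in S]] = S.
  move=> S; rewrite -imset_comp; under eq_imset => g do rewrite /= im2.
  exact: imset_id.
exists phi; rewrite /hajos_join /=; split.
- move=> o1 o2; rewrite !inE.
  move=> /orP[/imsetP[x0 x0W ->]|/imsetP[x0 x0W ->]] /orP[/imsetP[y0 y0W ->]|/imsetP[y0 y0W ->]];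
    rewrite ?p1 ?p2 => xy; subst y0 => //.
  + have : x0 \in W1 :&: W2 by rewrite inE x0W y0W.
    by rewrite W12 inE => /eqP ->; rewrite /hj_map1 /hj_map2 eqxx.
  + have : x0 \in W1 :&: W2 by rewrite inE x0W y0W.
    by rewrite W12 inE => /eqP ->; rewrite /hj_map1 /hj_map2 eqxx.
- by rewrite imsetU im1 im2 HV.
have Hstar : phi @: (if v \in e then None |: (@hj_map1 T T v @: (e1 :\ v) :|: @hj_map2 T T v @: (e2 :\ v))
                     else (@hj_map1 T T v @: (e1 :\ v) :|: @hj_map2 T T v @: (e2 :\ v))) = e.
  have core : phi @: (@hj_map1 T T v @: (e1 :\ v) :|: @hj_map2 T T v @: (e2 :\ v)) = (e1 :\ v) :|: (e2 :\ v).
    by rewrite imsetU im1 im2.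
  case: (boolP (v \in e)) => ve; rewrite ?imsetU1 core; apply/setP => x; rewrite !inE.
    case: (eqVneq x v) => [->|xv] //=.
    case xe: (x \in e) => //=.
    by move: (subsetP eV x xe); rewrite HV inE.
  case: (eqVneq x v) => [->|xv] //=; first by rewrite (negbTE ve).
  case xe: (x \in e) => //=.
  by move: (subsetP eV x xe); rewrite HV inE.
rewrite !imsetU imset_set1 IM1 IM2 Hstar !setU1K ?inE ?(negbTE e1E) ?(negbTE e2E) //.
apply/setP => f; rewrite !inE.
case: (eqVneq f e) => [->|fe]; first by rewrite eE orbT.
rewrite orbF; case fE: (f \in hE G) => //=.
by case: (Hcls f fE fe) => ->; rewrite ?orbT.
Qed.
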